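(* Let $H$ be a finite group acting by automorphisms on a discrete group $\Gamma$, let $L$ be a Hopf algebra and let $\pi:C^*(\Gamma)\rtimes C(H)\to L$ be a surjective Hopf algebra map such that the restriction of $\pi$ to $C(H)=1\otimes C(H)$ is injective, and such that for $r\in\Gamma$ and $f\in C(H)$, $\pi(r\otimes1)=\pi(1\otimes f)$ implies $r=1$. Then $\pi$ is an isomorphism.
   Context: The crossed coproduct Hopf algebra $C^*(\Gamma)\rtimes C(H)$ is $C^*(\Gamma)\otimes C(H)$ as an algebra, with comultiplication $\Delta(r\otimes\delta_k)=\sum_{h\in H}(r\otimes\delta_h)\otimes(h^{-1}\cdot r\otimes\delta_{h^{-1}k})$ for $r\in\Gamma$, $k\in H$, where $\delta_k$ is the indicator function of $k$. *)

(* Defs.v *)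
(* Algebraic (Hopf-algebraic) rendering of the crossed
   coproduct C[Gamma] x| C(H) over the complex numbers  R[i]  (R : realType). *)
From HB Require Import structures.
From mathcomp Require Import all_boot all_order all_algebra all_fingroup.
From mathcomp Require Import finmap complex reals.

Set Implicit Arguments.
Unset Strict Implicit.
Unset Printing Implicit Defensive.

Import GRing.Theory.
Local Open Scope ring_scope.

(* An element of  L (x) L  is represented by a finite list of pairs
   [(a_1,b_1); ...; (a_n,b_n)] standing for  sum_i a_i (x) b_i.  Two such
   representatives denote the same tensor iff they are identified by every
   bilinear map out of L x L (universal property of the tensor product).                            *)
Section Tensors.
Variables (K : fieldType) (L : lmodType K).

Definition bilinear_map (W : lmodType K) (b : L -> L -> W) : Prop :=
  (forall (a : K) x y z, b (a *: x + y) z = a *: b x z + b y z) /\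
  (forall (a : K) x y z, b z (a *: x + y) = a *: b z x + b z y).

Definition trilinear_map (W : lmodType K) (b : L -> L -> L -> W) : Prop :=
  [/\ (forall (a : K) x y u v, b (a *: x + y) u v = a *: b x u v + b y u v),
      (forall (a : K) x y u v, b u (a *: x + y) v = a *: b u x v + b u y v) &
      (forall (a : K) x y u v, b u v (a *: x + y) = a *: b u v x + b u v y)].

Definition tensor2_eq (s t : seq (L * L)) : Prop :=
  forall (W : lmodType K) (b : L -> L -> W), bilinear_map b ->
    \sum_(u <- s) b u.1 u.2 = \sum_(u <- t) b u.1 u.2.

Definition tensor3_eq (s t : seq (L * L * L)) : Prop :=
  forall (W : lmodType K) (b : L -> L -> L -> W), trilinear_map b ->
    \sum_(u <- s) b u.1.1 u.1.2 u.2 = \sum_(u <- t) b u.1.1 u.1.2 u.2.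

End Tensors.

Record hopf_data (K : fieldType) (L : algType K) := HopfData {
  comul : L -> seq (L * L);
  counit : L -> K;
  antipode : L -> L
}.

Record is_hopf_algebra (K : fieldType) (L : algType K) (h : hopf_data L)
    : Prop := IsHopfAlgebra {
  comul_linear : forall (a : K) (x y : L),
    tensor2_eq (comul h (a *: x + y))
      ([seq (a *: u.1, u.2) | u <- comul h x] ++ comul h y);
  comul_mult : forall x y : L,
    tensor2_eq (comul h (x * y))
      [seq (u.1 * v.1, u.2 * v.2) | u <- comul h x, v <- comul h y];
  comul_one : tensor2_eq (comul h 1) [:: (1, 1)];
  comul_coassoc : forall x : L,
    tensor3_eq
      [seq (v.1, v.2, u.2) | u <- comul h x, v <- comul h u.1]
      [seq (u.1, v.1, v.2) | u <- comul h x, v <- comul h u.2];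
  counit_linear : forall (a : K) (x y : L),
    counit h (a *: x + y) = a * counit h x + counit h y;
  counit_mult : forall x y : L, counit h (x * y) = counit h x * counit h y;
  counit_one : counit h 1 = 1;
  counit_left : forall x : L, \sum_(u <- comul h x) counit h u.1 *: u.2 = x;
  counit_right : forall x : L, \sum_(u <- comul h x) counit h u.2 *: u.1 = x;
  antipode_linear : forall (a : K) (x y : L),
    antipode h (a *: x + y) = a *: antipode h x + antipode h y;
  antipode_left : forall x : L,
    \sum_(u <- comul h x) antipode h u.1 * u.2 = counit h x *: 1;
  antipode_right : forall x : L,
    \sum_(u <- comul h x) u.1 * antipode h u.2 = counit h x *: 1
}.

Definition is_action_by_automorphisms (Gamma : groupType) (H : finGroupType)
    (act : H -> Gamma -> Gamma) : Prop :=
  [/\ forall r, act 1%g r = r,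
      forall (h k : H) r, act (h * k)%g r = act h (act k r) &
      forall (h : H) (r s : Gamma), act h (r * s)%g = (act h r * act h s)%g].

(* The crossed coproduct  A = C[Gamma] x| C(H).  As a vector space it has the
   basis  r (x) delta_k  (r in Gamma, k in H); an element of A is a finitely
   supported coefficient function  Gamma * H -> K.                          *)
Definition crossed_coprod (K : fieldType) (Gamma : groupType) (H : finGroupType)
  := {fsfun (Gamma * H) -> K with 0}.

(* The linear map  pi : A -> L  determined by its values
   p r k = pi (r (x) delta_k)  on the basis.                                 *)
Definition cc_map (K : fieldType) (Gamma : groupType) (H : finGroupType)
    (L : lmodType K) (p : Gamma -> H -> L) (c : crossed_coprod K Gamma H) : L :=
  \sum_(x <- finsupp c) c x *: p x.1 x.2.

(* pi is a Hopf algebra map  C[Gamma] x| C(H) -> L, written on the basis: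
   - multiplicativity: (r (x) delta_k)(s (x) delta_l) = [k = l] rs (x) delta_k;
   - unit: 1_A = sum_k 1 (x) delta_k;
   - comultiplication:
       Delta (r (x) delta_k)
         = sum_h (r (x) delta_h) (x) (h^-1 . r (x) delta_(h^-1 k));
   - counit: eps (r (x) delta_k) = delta_k(1).                              *)
Record is_cc_hopf_map (K : fieldType) (Gamma : groupType) (H : finGroupType)
    (act : H -> Gamma -> Gamma) (L : algType K) (hL : hopf_data L)
    (p : Gamma -> H -> L) : Prop := IsCCHopfMap {
  cc_map_mult : forall (r s : Gamma) (k l : H),
    p r k * p s l = if k == l then p (r * s)%g k else 0;
  cc_map_one : \sum_(k : H) p 1%g k = 1;
  cc_map_comul : forall (r : Gamma) (k : H),
    tensor2_eq (comul hL (p r k))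
      [seq (p r h, p (act h^-1%g r) (h^-1 * k)%g) | h <- enum H];
  cc_map_counit : forall (r : Gamma) (k : H),
    counit hL (p r k) = (k == 1%g)%:R
}.

(* Main.v *)
Require Import Defs.
From HB Require Import structures.
From mathcomp Require Import all_boot all_order all_algebra all_fingroup.
From mathcomp Require Import finmap complex reals.
From mathcomp Require Import boolp classical_sets.
From mathcomp Require Import zify.

Set Implicit Arguments.
Unset Strict Implicit.
Unset Printing Implicit Defensive.

Import GRing.Theory.
Local Open Scope ring_scope.

Section Func.
Variables (K : fieldType) (L : lmodType K).

Definition lclosed (V : L -> Prop) := forall a x y, V x -> V y -> V (a *: x + y).

Lemma functional_ext (V0 : L -> Prop) (v : L) :
  V0 0 -> lclosed V0 -> ~ V0 v ->
  exists phi : L -> K, (forall a x y, phi (a *: x + y) = a * phi x + phi y) /\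
    phi v = 1 /\ forall u, V0 u -> phi u = 0.
Proof.
move=> V00 V0c V0v.
pose good (V : set L) := [/\ forall x, V0 x -> V x, ~ V v & lclosed V].
pose P (V : set L) := (forall x, ~ V x) \/ good V.
have [A [PA Amax]] : exists A, P A /\ forall B, (A `<` B)%classic -> ~ P B.
  apply: Zorn_bigcup => F FP Ftot.
  have [[X0 FX0 gX0]|nog] := pselect (exists2 X, F X & good X); last first.
    left => x [X FX Xx]; have [Xe|gX] := FP X FX; first exact: (Xe x).
    by apply: nog; exists X.
  right; split.
  - by move=> x V0x; exists X0 => //; case: gX0 => + _ _; apply.
  - move=> [X FX Xv]; have [Xe|[_ + _]] := FP X FX; first exact: (Xe v).
    by apply.
  - move=> a x y [X1 FX1 X1x] [X2 FX2 X2y].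
    have [X12|X21] := Ftot X1 X2 FX1 FX2.
    + have [Xe|[_ _ X2c]] := FP X2 FX2; first by case: (Xe y).
      by exists X2 => //; apply: X2c => //; apply: X12.
    + have [Xe|[_ _ X1c]] := FP X1 FX1; first by case: (Xe x).
      by exists X1 => //; apply: X1c => //; apply: X21.
have gA : good A.
  case: PA => // Ae; exfalso; apply: (Amax V0); last by right; split.
  split; first by move=> x Ax; case: (Ae x).
  by move=> sub; case: (Ae 0); apply: sub.
case: gA => V0A Av Ac.
have A0 : A 0 by apply: V0A.
have AN x : A x -> A (- x).
  by move=> Ax; rewrite -[- x]addr0 -scaleN1r; apply: Ac.
have AD x y : A x -> A y -> A (x + y).
  by move=> Ax Ay; rewrite -[x]scale1r; apply: Ac.
have AZ a x : A x -> A (a *: x).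
  by move=> Ax; rewrite -[a *: x]addr0; apply: Ac.
have dec x : exists c, A (x - c *: v).
  have [Ax|nAx] := pselect (A x); first by exists 0; rewrite scale0r subr0.
  pose B := fun y => exists c, A (y - c *: x).
  have nPB : ~ P B.
    apply: Amax; split.
      by move=> y Ay; exists 0; rewrite scale0r subr0.
    move=> BA; apply: nAx; apply: BA; exists 1; rewrite scale1r subrr //.
  have [c Bv] : B v.
    apply: contrapT => nBv; apply: nPB; right; split => //.
      by move=> y /V0A Ay; exists 0; rewrite scale0r subr0.
    move=> a y z [c1 h1] [c2 h2]; exists (a * c1 + c2).
    have -> : a *: y + z - (a * c1 + c2) *: x =
       a *: (y - c1 *: x) + (z - c2 *: x).
      by rewrite scalerDl -scalerA scalerBr opprD addrACA.
    exact: Ac.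
  have c0 : c != 0.
    by apply/eqP => c0; move: Bv; rewrite c0 scale0r subr0.
  exists c^-1.
  have -> : x - c^-1 *: v = - c^-1 *: (v - c *: x).
    by rewrite scaleNr scalerBr scalerA (mulVf c0) scale1r opprB.
  exact: AZ.
have uniq c1 c2 x : A (x - c1 *: v) -> A (x - c2 *: v) -> c1 = c2.
  move=> h1 h2; have h := AD _ _ h2 (AN _ h1).
  have e : x - c2 *: v + - (x - c1 *: v) = (c1 - c2) *: v.
    by rewrite opprB addrC addrA subrK scalerBl.
  rewrite e in h; apply/eqP; rewrite -subr_eq0; apply/negPn/negP => ne.
  by apply: Av; have := AZ (c1 - c2)^-1 _ h; rewrite scalerA (mulVf ne) scale1r.
pose phi x := projT1 (cid (dec x)).
have phiP x : A (x - phi x *: v) by rewrite /phi; case: cid.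
exists phi; split; last split.
- move=> a x y; apply: (uniq _ _ (a *: x + y)) => //.
  have := Ac a _ _ (phiP x) (phiP y).
  by rewrite scalerDl -scalerA scalerBr opprD addrACA.
- by apply: (uniq _ _ v) => //; rewrite scale1r subrr.
- by move=> u V0u; apply: (uniq _ _ u) => //; rewrite scale0r subr0; apply: V0A.
Qed.
Definition linf (phi : L -> K) := forall a x y, phi (a *: x + y) = a * phi x + phi y.

Lemma linf0 phi : linf phi -> phi 0 = 0.
Proof.
move=> hl; have := hl 1 0 0; rewrite scale1r addr0 mul1r => h.
by apply: (addrI (phi 0)); rewrite addr0 -h.
Qed.

Lemma linf_sum phi (I : Type) (s : seq I) (d : I -> K) (F : I -> L) :
  linf phi -> phi (\sum_(i <- s) d i *: F i) = \sum_(i <- s) d i * phi (F i).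
Proof.
move=> hl; elim: s => [|i s IH]; first by rewrite !big_nil linf0.
by rewrite !big_cons hl IH.
Qed.
End Func.

Section Main.
Variables (R : realType) (Gamma : groupType) (H : finGroupType)
    (act : H -> Gamma -> Gamma)
    (Hact : is_action_by_automorphisms act)
    (L : algType R[i]) (hL : hopf_data L) (HL : is_hopf_algebra hL)
    (p : Gamma -> H -> L) (Hp : is_cc_hopf_map act hL p)
    (HinjCH : injective (fun f : {ffun H -> R[i]} =>
                           \sum_(k : H) f k *: p 1%g k))
    (Hsep : forall (r : Gamma) (f : {ffun H -> R[i]}),
              \sum_(k : H) p r k = \sum_(k : H) f k *: p 1%g k -> r = 1%g).

Local Notation K := R[i].

Lemma act1 h : act h 1%g = 1%g.
Proof.
case: Hact => _ _ aH; have := aH h 1%g 1%g; rewrite mulg1 => e.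
by apply: (mulgI (act h 1%g)); rewrite mulg1 -e.
Qed.

Lemma act_inj h : injective (act h).
Proof.
case: Hact => a1 aM _ x y e.
by rewrite -(a1 x) -(a1 y) -(mulVg h) !aM e.
Qed.

Lemma pmul r s k l : p r k * p s l = if k == l then p (r * s)%g k else 0.
Proof. by case: Hp => + _ _ _; apply. Qed.

Lemma e_ne0 k : p 1%g k != 0.
Proof.
apply/eqP => e0; pose f : {ffun H -> K} := [ffun h => (h == k)%:R].
have : f = [ffun => 0].
  apply: HinjCH => /=.
  rewrite [RHS]big1 => [|h _]; last by rewrite ffunE scale0r.
  rewrite (bigD1 k) //= big1 => [|h hk]; first by rewrite ffunE eqxx scale1r e0 addr0.
  by rewrite ffunE (negbTE hk) scale0r.
move=> /ffunP /(_ k); rewrite !ffunE eqxx => /eqP; by rewrite oner_eq0.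
Qed.

Lemma p_ne0 r k : p r k != 0.
Proof.
apply/eqP => h; apply: (negP (e_ne0 k)).
by have := pmul r r^-1%g k k; rewrite eqxx h mul0r mulgV => <-.
Qed.

Definition Bb (b : L -> L -> L) (x : L) := \sum_(u <- comul hL x) b u.1 u.2.

Lemma bscal (b : L -> L -> L) : bilinear_map b -> forall a x z, b (a *: x) z = a *: b x z.
Proof.
case=> h1 _ a x z.
have b0 : b 0 z = 0.
  have := h1 1 0 0 z; rewrite scale1r addr0 scale1r => h.
  by apply: (addrI (b 0 z)); rewrite addr0 -h.
by have := h1 a x 0 z; rewrite addr0 b0 addr0.
Qed.

Lemma Bb_lin b : bilinear_map b -> forall a x y, Bb b (a *: x + y) = a *: Bb b x + Bb b y.
Proof.
move=> hb a x y; rewrite /Bb (comul_linear HL a x y hb) big_cat big_map scaler_sumr /=.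
by congr (_ + _); apply: eq_bigr => u _; rewrite bscal.
Qed.

Lemma Bb0 b : bilinear_map b -> Bb b 0 = 0.
Proof.
move=> hb; have := Bb_lin hb 1 0 0; rewrite scale1r addr0 scale1r => h.
by apply: (addrI (Bb b 0)); rewrite addr0 -h.
Qed.

Lemma Bb_sum b (I : Type) (s : seq I) (c : I -> K) (F : I -> L) :
  bilinear_map b -> Bb b (\sum_(i <- s) c i *: F i) = \sum_(i <- s) c i *: Bb b (F i).
Proof.
move=> hb; elim: s => [|i s IH]; first by rewrite !big_nil Bb0.
by rewrite !big_cons Bb_lin // IH.
Qed.

Lemma Bb_p b r k : bilinear_map b ->
  Bb b (p r k) = \sum_(h <- enum H) b (p r h) (p (act h^-1%g r) (h^-1 * k)%g).
Proof. by move=> hb; rewrite /Bb ((cc_map_comul Hp r k) L b hb) big_map. Qed.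

Lemma sum_single (F : H -> L) k : (forall h, h != k -> F h = 0) ->
  \sum_(h <- enum H) F h = F k.
Proof.
move=> hF; rewrite big_enum /= (bigD1 k) //= big1 ?addr0 //.
Qed.

Lemma bil1 (phi : L -> K) (u v : L) : linf phi -> bilinear_map (fun a b => phi (u * a) *: (v * b)).
Proof.
move=> hl; split => a x y z /=.
  by rewrite mulrDr -scalerAr hl scalerDl scalerA.
by rewrite mulrDr -scalerAr scalerDr !scalerA [a * _]mulrC.
Qed.

Lemma bil2 (phi : L -> K) (u v : L) : linf phi -> bilinear_map (fun a b => phi (u * b) *: (v * a)).
Proof.
move=> hl; split => a x y z /=.
  by rewrite mulrDr -scalerAr scalerDr !scalerA [a * _]mulrC.
by rewrite mulrDr -scalerAr hl scalerDl scalerA.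
Qed.

Lemma triv s : p s 1%g = p 1%g 1%g -> s = 1%g.
Proof.
move=> hs.
have E h : exists c : K, p s h = c *: p 1%g h.
  have [phi [phil [phiv _]]] := @functional_ext _ L (fun x : L => x = 0)
      (p (act h^-1%g s) h^-1%g) erefl
      (fun a x y ex ey => ltac:(by rewrite ex ey scaler0 addr0))
      (fun e => ltac:(by move/eqP: e; rewrite (negbTE (p_ne0 _ _)))).
  exists (phi (p 1%g h^-1%g)).
  pose b := fun a b' => phi (p 1%g h^-1%g * b') *: (p 1%g h * a).
  have hb : bilinear_map b := bil2 (p 1%g h^-1%g) (p 1%g h) phil.
  have := congr1 (Bb b) hs; rewrite !Bb_p //.
  rewrite !(@sum_single _ h); first last.
  - by move=> g gh; rewrite /b [p 1%g h * _]pmul eq_sym (negbTE gh) scaler0.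
  - by move=> g gh; rewrite /b [p 1%g h * _]pmul eq_sym (negbTE gh) scaler0.
  rewrite /b !pmul !eqxx !mul1g mulg1 act1.
  by rewrite !ifT // phiv scale1r.
pose f := [ffun h => projT1 (cid (E h))].
apply: (@Hsep s f); apply: eq_bigr => h _; rewrite ffunE; by case: cid.
Qed.

Lemma indep (k : H) (n : nat) : forall (s : seq Gamma) (c : Gamma -> K), (size s <= n)%N -> uniq s ->
  \sum_(r <- s) c r *: p r k = 0 -> forall r, r \in s -> c r = 0.
Proof.
elim: n => [|n IH] s c hs us hsum r0 r0s.
  by move: hs; rewrite leqn0 size_eq0 => /eqP s0; rewrite s0 in r0s.
apply/eqP/negPn/negP => cr0.
set s' := rem r0 s.
have us' : uniq s' := rem_uniq r0 us.
have hs' : (size s' <= n)%N.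
  have : (0 < size s)%N by move: r0s; case: (s).
  move=> pos; move: hs; rewrite /s' size_rem //; case: (size s) pos => // m _.

have hsplit : \sum_(r <- s) c r *: p r k = c r0 *: p r0 k + \sum_(r <- s') c r *: p r k.
  by rewrite (perm_big _ (perm_to_rem r0s)) big_cons.
pose a r := - (c r / c r0).
have x0 : p r0 k = \sum_(r <- s') a r *: p r k.
  have e : c r0 *: p r0 k = - \sum_(r <- s') c r *: p r k.
    by apply/eqP; rewrite -addr_eq0 -hsplit hsum.
  rewrite -[p r0 k]scale1r -(mulVf cr0) -scalerA e scalerN scaler_sumr -sumrN.
  by apply: eq_bigr => r _; rewrite scalerA /a scaleNr mulrC.
case: (pselect (exists2 r1, r1 \in s' & a r1 != 0)) => [[r1 r1s ar1]|na]; last first.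
  apply: (negP (p_ne0 r0 k)); rewrite x0 big_seq big1 // => r rs.
  have : a r == 0 by apply/negPn/negP => ar; apply: na; exists r.
  by move/eqP->; rewrite scale0r.
pose V0 := fun y : L => exists d : Gamma -> K, y = \sum_(r <- rem r1 s') d r *: p r k.
have V00 : V0 0 by exists (fun=> 0); rewrite big1 // => r _; rewrite scale0r.
have V0c : lclosed V0.
  move=> a0 y z [d1 ->] [d2 ->]; exists (fun r => a0 * d1 r + d2 r).
  rewrite scaler_sumr -big_split; apply: eq_bigr => r _.
  by rewrite scalerA scalerDl.
have nV0 : ~ V0 (p r1 k).
  move=> [d e1]; pose c' := fun r => if r == r1 then -1 else d r.
  have hsum' : \sum_(r <- s') c' r *: p r k = 0.
    rewrite (perm_big _ (perm_to_rem r1s)) big_cons /c' eqxx scaleN1r.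
    rewrite (eq_big_seq (fun r => d r *: p r k)); first by rewrite -e1; apply: addNr.
    by move=> r; rewrite (mem_rem_uniq _ us') inE => /andP[/negbTE -> _].
  have := IH s' c' hs' us' hsum' r1 r1s.
  by rewrite /c' eqxx => /eqP; rewrite oppr_eq0 oner_eq0.
have [phi [phil [phi1 phi0]]] := functional_ext V00 V0c nV0.
have phir r : r \in rem r1 s' -> phi (p r k) = 0.
  move=> rin; apply: phi0; exists (fun t => (t == r)%:R).
  rewrite (big_rem r rin) /= eqxx scale1r big1_seq ?addr0 // => t /andP[_ tin].
  move: tin; rewrite (mem_rem_uniq _ (rem_uniq _ us')) inE => /andP[/negbTE -> _].
  by rewrite scale0r.
have phir0 : phi (p r0 k) = a r1.
  rewrite x0 linf_sum // (big_rem r1 r1s) /= phi1 mulr1 big1_seq ?addr0 //.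
  by move=> r /andP[_ rin]; rewrite phir // mulr0.
pose b := fun u v => phi (p 1%g k * u) *: (p 1%g 1%g * v).
have hb : bilinear_map b := bil1 (p 1%g k) (p 1%g 1%g) phil.
have Bx t : Bb b (p t k) = phi (p t k) *: p (act k^-1%g t) 1%g.
  rewrite Bb_p // (@sum_single _ k) => [|h hk].
    by rewrite /b mulVg !pmul !ifT // (mul1g t) mul1g.
  by rewrite /b pmul eq_sym (negbTE hk) linf0 // scale0r.
have := congr1 (Bb b) x0.
rewrite Bb_sum // (big_rem r1 r1s) /= !Bx big1_seq ?addr0; last first.
  by move=> r /andP[_ rin]; rewrite Bx phir // scale0r scaler0.
rewrite phir0 phi1 scale1r => /(scalerI ar1) e.
have := congr1 (fun y => p (act k^-1%g r1)^-1%g 1%g * y) e.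
rewrite /= !pmul eqxx mulVg => /triv h1.
move/(congr1 (mulg (act k^-1%g r1))): h1; rewrite mulKVg mulg1 => /act_inj r01.
by move: r1s; rewrite (mem_rem_uniq _ us) inE r01 eqxx.
Qed.

Lemma full_indep (S : seq (Gamma * H)) (d : Gamma * H -> K) : uniq S ->
  \sum_(x <- S) d x *: p x.1 x.2 = 0 -> forall x, x \in S -> d x = 0.
Proof.
move=> uS hS [r k] xS.
pose s := [seq y.1 | y <- S & y.2 == k].
have hk : \sum_(t <- s) d (t, k) *: p t k = 0.
  have e : \sum_(x <- S) p 1%g k * (d x *: p x.1 x.2) = 0 by rewrite -mulr_sumr hS mulr0.
  rewrite -[RHS]e.
  rewrite big_map big_filter [RHS](bigID (fun y => y.2 == k)) /=.
  have -> : \sum_(i <- S | i.2 != k) p 1%g k * (d i *: p i.1 i.2) = 0.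
    by rewrite big1 // => [[t l]] /= lk; rewrite -scalerAr pmul eq_sym (negbTE lk) scaler0.
  rewrite addr0; apply: eq_bigr => [[t l]] /= /eqP ->.
  by rewrite -scalerAr pmul eqxx mul1g.
have us : uniq s.
  rewrite map_inj_in_uniq ?filter_uniq // => [[t1 l1] [t2 l2]].
  by rewrite !mem_filter /= => /andP[/eqP -> _] /andP[/eqP -> _] /= ->.
apply: (@indep k (size s) s (fun t => d (t, k))) => //.
by apply/mapP; exists (r, k); rewrite // mem_filter /= eqxx.
Qed.

Lemma cc_map_seq (c : crossed_coprod K Gamma H) (S : seq (Gamma * H)) :
  uniq S -> {subset finsupp c <= S} ->
  cc_map p c = \sum_(x <- S) c x *: p x.1 x.2.
Proof.
move=> uS sub; rewrite /cc_map [RHS](bigID (fun x => x \in finsupp c)) /=.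
rewrite [X in _ = _ + X]big1 ?addr0; last first.
  by move=> x nx; rewrite (fsfun_dflt nx) scale0r.
rewrite -[RHS]big_filter; apply: perm_big; apply: uniq_perm.
- exact: fset_uniq.
- exact: filter_uniq.
move=> x; rewrite mem_filter; case xin: (x \in finsupp c) => //=.
by rewrite sub.
Qed.

Lemma cc_inj : injective (cc_map p).
Proof.
move=> c1 c2 e; pose S := undup (finsupp c1 ++ finsupp c2).
have uS : uniq S := undup_uniq _.
have s1 : {subset finsupp c1 <= S} by move=> x xi; rewrite mem_undup mem_cat xi.
have s2 : {subset finsupp c2 <= S} by move=> x xi; rewrite mem_undup mem_cat xi orbT.
rewrite (cc_map_seq uS s1) (cc_map_seq uS s2) in e.
have h0 : \sum_(x <- S) (c1 x - c2 x) *: p x.1 x.2 = 0.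
  rewrite (eq_bigr (fun x => c1 x *: p x.1 x.2 - c2 x *: p x.1 x.2)).
    by rewrite sumrB e subrr.
  by move=> x _; rewrite scalerBl.
apply/fsfunP => x; case: (boolP (x \in S)) => xS.
  by apply/eqP; rewrite -subr_eq0; apply/eqP; exact: full_indep uS h0 x xS.
rewrite !fsfun_dflt //.
  by apply: contra xS; exact: s2.
by apply: contra xS; exact: s1.
Qed.

End Main.

Theorem lemma4p5 (R : realType) (Gamma : groupType) (H : finGroupType)
    (act : H -> Gamma -> Gamma)
    (Hact : is_action_by_automorphisms act)
    (L : algType R[i]) (hL : hopf_data L) (HL : is_hopf_algebra hL)
    (p : Gamma -> H -> L) (Hp : is_cc_hopf_map act hL p)
    (Hsurj : forall y : L, exists c : crossed_coprod R[i] Gamma H,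
               cc_map p c = y)
    (HinjCH : injective (fun f : {ffun H -> R[i]} =>
                           \sum_(k : H) f k *: p 1%g k))
    (Hsep : forall (r : Gamma) (f : {ffun H -> R[i]}),
              \sum_(k : H) p r k = \sum_(k : H) f k *: p 1%g k -> r = 1%g) :
  bijective (cc_map p).
Proof.
have inj : injective (cc_map p) by eapply cc_inj; eassumption.
exists (fun y => projT1 (cid (Hsurj y))).
- by move=> c; apply: inj; case: cid.
- by move=> y; case: cid.
Qed.
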